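(* Let $p$ be the POP of length 4 defined by the relations $1>2$ and $4>3$; equivalently, avoiding $p$ means simultaneously avoiding the patterns $2134, 3124, 4123, 3214, 4213, 4312$. Let $a(n)=|S_n(p)|$. Then $a(0)=1$, and for $n\geq 1$, $a(n)=2a(n-1)+2^{n-1}-2$, so that $a(n)=(n-2)2^{n-1}+2$ for $n\geq 1$. Moreover, $$\sum_{n\geq 0}a(n)x^n=\frac{1-4x+5x^2}{(1-x)(1-2x)^2}.$$
   Context: An $n$-permutation is a word $\pi=\pi_1\cdots\pi_n$ containing each of $1,\ldots,n$ exactly once; $S_n$ is the set of $n$-permutations ($S_0$ consists of the empty permutation). A partially ordered pattern (POP) $p$ of length $k$ is a partial order on the label set $\{1,\ldots,k\}$; it is described by a set of generating relations, where a relation $x>y$ means that in an occurrence the entry in the $x$-th chosen position must be larger than the entry in the $y$-th chosen position, and labels not involved in any relation are unconstrained. An $n$-permutation $\pi$ contains $p$ if there are indices $1\leq i_1<\cdots<i_k\leq n$ such that $\pi_{i_x}>\pi_{i_y}$ whenever $x>y$ in the partial order; otherwise $\pi$ avoids $p$. $S_n(p)$ denotes the set of $n$-permutations avoiding $p$. A permutation $\pi$ avoids a classical pattern $q$ if it has no subsequence order-isomorphic to $q$. *)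

(* Defs.v *)
From HB Require Import structures.
From mathcomp Require Import all_boot all_order all_algebra all_fingroup.
Set Implicit Arguments. Unset Strict Implicit. Unset Printing Implicit Defensive.
Import Order.TTheory GRing.Theory Num.Theory.

(* An n-permutation is s : 'S_n, the word s 0, s 1, ..., s (n-1) over the
   values 0..n-1 (shifted by one from the paper's 1..n; only relative order
   matters). Positions and labels are 0-indexed. *)

(* A POP of length k, given by its generating relations: a pair (x, y)
   means "x > y" in the partial order. *)
Definition pop (k : nat) := seq ('I_k * 'I_k).

(* pi contains the POP: there are positions f 0 < ... < f (k-1) such that
   pi (f x) > pi (f y) for every generating relation x > y (equivalently,
   for every relation of the generated partial order, by transitivity). *)
Definition pop_contains (n k : nat) (s : 'S_n) (p : pop k) : bool :=
  [exists f : {ffun 'I_k -> 'I_n},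
     [forall x : 'I_k, forall y : 'I_k, (x < y)%N ==> (f x < f y)%N]
     && all (fun r : 'I_k * 'I_k => (s (f r.2) < s (f r.1))%N) p].

Definition pop_avoids (n k : nat) (s : 'S_n) (p : pop k) : bool :=
  ~~ pop_contains s p.

(* Classical pattern q, given as a word (e.g. [:: 2;1;3;4] for 2134). *)
Definition classical_contains (n : nat) (s : 'S_n) (q : seq nat) : bool :=
  [exists f : {ffun 'I_(size q) -> 'I_n},
     [forall x : 'I_(size q), forall y : 'I_(size q),
        ((x < y)%N ==> (f x < f y)%N)
        && ((s (f x) < s (f y))%N == (nth 0 q x < nth 0 q y)%N)]].

Definition classical_avoids (n : nat) (s : 'S_n) (q : seq nat) : bool :=
  ~~ classical_contains s q.

(* The POP of length 4 with relations 1 > 2 and 4 > 3 (0-indexed: 0>1, 3>2). *)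
Definition p4 : pop 4 :=
  [:: (@inord 3 0, @inord 3 1); (@inord 3 3, @inord 3 2)].

Definition a (n : nat) : nat := #|[set s : 'S_n | pop_avoids s p4]|.

Local Open Scope ring_scope.
Definition gf_num : {poly int} := 1 - 4%:R *: 'X + 5%:R *: 'X^2.
Definition gf_den : {poly int} := (1 - 'X) * (1 - 2%:R *: 'X) ^+ 2.

(* Main.v *)
Require Import Defs.
From HB Require Import structures.
From mathcomp Require Import all_boot all_order all_algebra all_fingroup.
From mathcomp Require Import zify ring.
Import Order.TTheory GRing.Theory Num.Theory.
Set Implicit Arguments. Unset Strict Implicit. Unset Printing Implicit Defensive.

Definition OccN m (f : nat -> nat) : Prop :=
  exists i1 i2 i3 i4, [/\ i1 < i2, i2 < i3, i3 < i4, i4 < m & f i2 < f i1 /\ f i3 < f i4].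
Definition PincN m k (f : nat -> nat) : Prop :=
  forall a b, a < b -> b < m -> (b < k -> f a < f b) /\ (k <= a -> f b < f a).
Definition injN m (f : nat -> nat) := forall a b, a < m -> b < m -> f a = f b -> a = b.

Definition hh j i := if i < j then i else i.-1.
Definition ll j i := if i < j then i else i.+1.
Definition FF j (f : nat -> nat) i := if i == j then 0 else (f (hh j i)).+1.

Lemma Fspec j f i : (i = j /\ FF j f i = 0) \/ (i <> j /\ FF j f i = (f (hh j i)).+1).
Proof. rewrite /FF; case: eqP; auto. Qed.
Lemma hspec j i : (i < j /\ hh j i = i) \/ (j <= i /\ hh j i = i - 1).
Proof. rewrite /hh; case: ltnP; [left|right]; split => //; lia. Qed.
Lemma lspec j i : (i < j /\ ll j i = i) \/ (j <= i /\ ll j i = i.+1).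
Proof. rewrite /ll; case: ltnP; auto. Qed.
Lemma Fl j f i : FF j f (ll j i) = (f i).+1.
Proof.
rewrite /FF /ll /hh; case: ltnP => H.
  by rewrite ifN ?H //; apply/eqP; lia.
by rewrite ifN /=; [rewrite ifN //; lia | apply/eqP; lia].
Qed.


Lemma FF_lt j f i : i < j -> FF j f i = (f i).+1.
Proof. by move=> H; rewrite /FF /hh H ifN //; apply/eqP; lia. Qed.
Lemma FF_gt j f i : j < i -> FF j f i = (f i.-1).+1.
Proof. by move=> H; rewrite /FF /hh ifN; [rewrite ifN //; lia | apply/eqP; lia]. Qed.
Lemma FF_eq j f : FF j f j = 0.
Proof. by rewrite /FF eqxx. Qed.

Ltac sp j f i := let H1 := fresh "F" in let H2 := fresh "h" in
  have H1 := Fspec j f i; have H2 := hspec j i.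

Lemma occ_lift j m f : j <= m -> OccN m f -> OccN m.+1 (FF j f).
Proof.
move=> jm [i1 [i2 [i3 [i4 [H1 H2 H3 H4 [H5 H6]]]]]].
exists (ll j i1), (ll j i2), (ll j i3), (ll j i4); rewrite !Fl.
have:= lspec j i1; have:= lspec j i2; have:= lspec j i3; have:= lspec j i4.
split; lia.
Qed.

Lemma occ_unlift j m f i1 i2 i3 i4 : j <= m ->
  i1 < i2 -> i2 < i3 -> i3 < i4 -> i4 < m.+1 ->
  FF j f i2 < FF j f i1 -> FF j f i3 < FF j f i4 ->
  i1 <> j -> i2 <> j -> i3 <> j -> i4 <> j -> OccN m f.
Proof.
move=> jm H1 H2 H3 H4 H5 H6 N1 N2 N3 N4.
exists (hh j i1), (hh j i2), (hh j i3), (hh j i4).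
sp j f i1; sp j f i2; sp j f i3; sp j f i4.
split; lia.
Qed.

Lemma L1 m f : OccN m.+1 (FF 0 f) <-> OccN m f.
Proof.
split; last exact: occ_lift.
move=> [i1 [i2 [i3 [i4 [H1 H2 H3 H4 [H5 H6]]]]]].
sp 0 f i1; sp 0 f i2;
apply: (occ_unlift _ H1 H2 H3 H4 H5 H6); lia.
Qed.

Lemma L2 m f : OccN m.+1 (FF m f) <-> OccN m f.
Proof.
split; last exact: occ_lift.
move=> [i1 [i2 [i3 [i4 [H1 H2 H3 H4 [H5 H6]]]]]].
sp m f i3; sp m f i4;
apply: (occ_unlift _ H1 H2 H3 H4 H5 H6); lia.
Qed.

Lemma L3 m j f : 0 < j < m -> injN m f -> ~ OccN m.+1 (FF j f) <-> PincN m j f.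
Proof.
move=> jm inj; split.
  move=> NO a b ab bm; split => H.
    case: (ltngtP (f a) (f b)) => // [fab|fab]; last by move: (inj _ _ (ltn_trans ab bm) bm fab); lia.
    case: NO; exists a, b, j, m.
    rewrite (FF_lt f (_ : a < j)) ?(FF_lt f (_ : b < j)) ?FF_eq ?(FF_gt f (_ : j < m)); try lia; split; lia.
  case: (ltngtP (f a) (f b)) => // [fab|fab]; last by move: (inj _ _ (ltn_trans ab bm) bm fab); lia.
  case: NO; exists 0, j, a.+1, b.+1.
  rewrite FF_eq (FF_lt f (_ : 0 < j)) ?(FF_gt f (_ : j < a.+1)) ?(FF_gt f (_ : j < b.+1)) /=; try lia; split; lia.
move=> P [i1 [i2 [i3 [i4 [H1 H2 H3 H4 [H5 H6]]]]]].
case: (ltnP i2 j) => H.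
  rewrite (FF_lt f H) (FF_lt f (_ : i1 < j)) in H5; last by lia.
  have [P1 _] := P i1 i2 H1 ltac:(lia).
  have := P1 H; lia.
rewrite (FF_gt f (_ : j < i3)) ?(FF_gt f (_ : j < i4)) in H6; try lia.
have [_ P2] := P i3.-1 i4.-1 ltac:(lia) ltac:(lia).
have := P2 ltac:(lia); lia.
Qed.

Lemma L4 m k f : 0 < m -> PincN m.+1 k (FF 0 f) <-> 0 < k /\ PincN m k.-1 f.
Proof.
move=> m0; split.
  move=> P; have k0 : 0 < k.
    case: (posnP k) => // k0; have [_ P2] := P 0 1 isT ltac:(lia).
    by have := P2 ltac:(lia); rewrite FF_eq.
  split => // a b ab bm; have := P a.+1 b.+1 ltac:(lia) ltac:(lia).
  rewrite (FF_gt f (_ : 0 < a.+1)) // (FF_gt f (_ : 0 < b.+1)) //=.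
  move=> [P1 P2]; split => Hk; [have := P1 ltac:(lia) | have := P2 ltac:(lia)]; lia.
move=> [k0 P] a b ab bm.
have bp : 0 < b by lia.
rewrite (FF_gt f bp).
case: (posnP a) => a0.
  by rewrite a0 FF_eq; split => //; lia.
rewrite (FF_gt f a0).
have [P1 P2] := P a.-1 b.-1 ltac:(lia) ltac:(lia).
split => Hk; [have := P1 ltac:(lia) | have := P2 ltac:(lia)]; lia.
Qed.

Lemma L5 m k f : 0 < m -> PincN m.+1 k (FF m f) <-> k <= m /\ PincN m k f.
Proof.
move=> m0; split.
  move=> P; have km : k <= m.
    case: (leqP k m) => // km; have [P1 _] := P 0 m m0 ltac:(lia).
    by have := P1 km; rewrite FF_eq.
  split => // a b ab bm; have := P a b ab ltac:(lia).
  rewrite (FF_lt f (_ : a < m)) ?(FF_lt f (_ : b < m)) //; try lia.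
move=> [km P] a b ab bm.
have am : a < m by lia.
rewrite (FF_lt f am).
case: (ltngtP b m) => bm'; try lia.
  rewrite (FF_lt f bm').
  have [P1 P2] := P a b ab bm'.
  split => Hk; [have := P1 ltac:(lia) | have := P2 ltac:(lia)]; lia.
by rewrite bm' FF_eq; split => //; lia.
Qed.

Lemma L6 m j k f : 0 < j < m -> ~ PincN m.+1 k (FF j f).
Proof.
move=> jm P; case: (ltnP j k) => jk.
  have [P1 _] := P 0 j ltac:(lia) ltac:(lia).
  by have := P1 jk; rewrite FF_eq.
have [_ P2] := P j m ltac:(lia) ltac:(lia).
by have := P2 jk; rewrite FF_eq.
Qed.

Lemma card_sum (T : finType) (P : pred T) : #|[set x | P x]| = \sum_(x : T) (P x : nat).
Proof. by rewrite -sum1_card big_mkcond; apply: eq_bigr => x _; rewrite inE; case: (P x). Qed.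

Lemma decomp n (R : pred 'S_n.+1) :
  #|[set s | R s]| = \sum_(j < n.+1) #|[set s' : 'S_n | R (lift_perm j ord0 s')]|.
Proof.
pose phi := fun x : 'I_n.+1 * 'S_n => lift_perm x.1 ord0 x.2.
have phi_inj : injective phi.
  move=> [j1 s1] [j2 s2]; rewrite /phi /= => E.
  have ej : j1 = j2.
    apply: (@perm_inj _ (lift_perm j1 ord0 s1)).
    by rewrite lift_perm_id E lift_perm_id.
  subst j2; congr pair; apply/permP => k; apply: (@lift_inj _ ord0).
  by rewrite -(lift_perm_lift j1 ord0 s1) -(lift_perm_lift j1 ord0 s2) E.
have phi_bij : bijective phi.
  apply: inj_card_bij => //; rewrite card_prod card_ord !card_Sn factS.
  by [].
transitivity #|[set x | R (phi x)]|.
  rewrite -(card_imset _ phi_inj); apply: eq_card => s; rewrite !inE.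
  apply/idP/imsetP.
    case: phi_bij => g g1 g2 Rs; exists (g s); by rewrite ?inE g2.
  by case=> x; rewrite inE => Rx ->.
transitivity (\sum_(j < n.+1) \sum_(s : 'S_n) (R (lift_perm j ord0 s) : nat)).
  by rewrite card_sum pair_bigA.
by apply: eq_bigr => j _; rewrite card_sum.
Qed.

Definition gs n (s : 'S_n) (i : nat) : nat :=
  if (insub i : option 'I_n) is Some x then val (s x) else 0.

Lemma gsE n (s : 'S_n) (x : 'I_n) : gs s x = s x.
Proof. by rewrite /gs valK. Qed.

Lemma gs_inj n (s : 'S_n) : injN n (gs s).
Proof.
move=> a b Ha Hb.
rewrite (_ : a = Ordinal Ha) // (_ : b = Ordinal Hb) // !gsE => E.
by have /perm_inj -> : s (Ordinal Ha) = s (Ordinal Hb) by apply: val_inj.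
Qed.

Lemma lift_ll n (j : 'I_n.+1) (k : 'I_n) : (lift j k : nat) = ll j k.
Proof. by rewrite /= /bump /ll; case: ltnP => H /=; lia. Qed.

Lemma gs_lift n (j : 'I_n.+1) (s : 'S_n) i : i < n.+1 ->
  gs (lift_perm j ord0 s) i = FF j (gs s) i.
Proof.
move=> Hi; rewrite (_ : i = Ordinal Hi) // gsE.
case: (unliftP j (Ordinal Hi)) => [k|] ->.
  by rewrite lift_perm_lift (lift_ll j k) Fl gsE.
by rewrite lift_perm_id FF_eq.
Qed.

Definition occb m (f : nat -> nat) : bool :=
  [exists i1 : 'I_m, exists i2 : 'I_m, exists i3 : 'I_m, exists i4 : 'I_m,
     [&& i1 < i2, i2 < i3, i3 < i4, f i2 < f i1 & f i3 < f i4]].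

Lemma occP m f : reflect (OccN m f) (occb m f).
Proof.
apply: (iffP idP).
  case/existsP=> i1 /existsP [i2 /existsP [i3 /existsP [i4 /and5P [H1 H2 H3 H4 H5]]]].
  by exists i1, i2, i3, i4; split.
move=> [i1 [i2 [i3 [i4 [H1 H2 H3 H4 [H5 H6]]]]]].
have h3 : i3 < m by lia.
have h2 : i2 < m by lia.
have h1 : i1 < m by lia.
apply/existsP; exists (Ordinal h1); apply/existsP; exists (Ordinal h2).
apply/existsP; exists (Ordinal h3); apply/existsP; exists (Ordinal H4).
by apply/and5P; split.
Qed.

Definition pincb m k (f : nat -> nat) : bool :=
  [forall a : 'I_m, forall b : 'I_m,
     (a < b) ==> ((b < k) ==> (f a < f b)) && ((k <= a) ==> (f b < f a))].

Lemma pincP m k f : reflect (PincN m k f) (pincb m k f).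
Proof.
apply: (iffP idP).
  move=> /forallP P a b ab bm.
  have am : a < m by lia.
  have /forallP /(_ (Ordinal bm)) := P (Ordinal am).
  by rewrite /= ab /= => /andP [/implyP ? /implyP ?].
move=> P; apply/forallP => a; apply/forallP => b; apply/implyP => ab.
have [P1 P2] := P a b ab (ltn_ord b).
by apply/andP; split; apply/implyP.
Qed.

Lemma occN_ext m f g : (forall i, i < m -> f i = g i) -> OccN m f -> OccN m g.
Proof.
move=> E [i1 [i2 [i3 [i4 [H1 H2 H3 H4 [H5 H6]]]]]].
exists i1, i2, i3, i4; rewrite -!E //; lia.
Qed.

Lemma pincN_ext m k f g : (forall i, i < m -> f i = g i) -> PincN m k f -> PincN m k g.
Proof.
move=> E P a b ab bm; rewrite -!E //; try lia; exact: P.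
Qed.

Lemma occb_lift n (j : 'I_n.+1) (s : 'S_n) :
  occb n.+1 (gs (lift_perm j ord0 s)) = occb n.+1 (FF j (gs s)).
Proof.
by apply/occP/occP; apply: occN_ext => i Hi; rewrite gs_lift.
Qed.

Lemma pincb_lift n k (j : 'I_n.+1) (s : 'S_n) :
  pincb n.+1 k (gs (lift_perm j ord0 s)) = pincb n.+1 k (FF j (gs s)).
Proof.
by apply/pincP/pincP; apply: pincN_ext => i Hi; rewrite gs_lift.
Qed.

Definition an n := #|[set s : 'S_n | ~~ occb n (gs s)]|.
Definition cn n k := #|[set s : 'S_n | pincb n k (gs s)]|.

Lemma split_sum (G : nat -> nat) n :
  \sum_(j < n.+2) G j = G 0 + \sum_(0 <= i < n) G i.+1 + G n.+1.
Proof. by rewrite -(big_mkord xpredT) big_nat_recl // big_nat_recr //= addnA. Qed.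

Lemma an_rec n : an n.+2 = 2 * an n.+1 + \sum_(0 <= i < n) cn n.+1 i.+1.
Proof.
rewrite /an decomp.
pose G k := #|[set s : 'S_n.+1 | ~~ occb n.+2 (FF k (gs s))]|.
transitivity (\sum_(j < n.+2) G j).
  by apply: eq_bigr => j _; apply: eq_card => s; rewrite !inE occb_lift.
rewrite split_sum.
have -> : G 0 = an n.+1.
  apply: eq_card => s; rewrite !inE; congr negb.
  by apply/occP/occP => /L1.
have -> : G n.+1 = an n.+1.
  apply: eq_card => s; rewrite !inE; congr negb.
  by apply/occP/occP => /L2.
have -> : \sum_(0 <= i < n) G i.+1 = \sum_(0 <= i < n) cn n.+1 i.+1.
  apply: eq_big_nat => i Hi; apply: eq_card => s; rewrite !inE.
  have E := L3 (j:=i.+1) (m:=n.+1) (f := gs s) ltac:(lia) (@gs_inj _ s).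
  apply/idP/idP.
    move/negP => N; apply/pincP; apply/E => O; apply: N; exact/occP.
  by move/pincP/E => N; apply/negP => /occP.
by rewrite /an; lia.
Qed.

Lemma cn_rec n k :
  cn n.+2 k = (0 < k) * cn n.+1 k.-1 + (k <= n.+1) * cn n.+1 k.
Proof.
rewrite /cn decomp.
pose G j := #|[set s : 'S_n.+1 | pincb n.+2 k (FF j (gs s))]|.
transitivity (\sum_(j < n.+2) G j).
  by apply: eq_bigr => j _; apply: eq_card => s; rewrite !inE pincb_lift.
rewrite split_sum.
have -> : \sum_(0 <= i < n) G i.+1 = 0.
  rewrite big1_seq //= => i; rewrite mem_iota => Hi.
  apply/eqP; rewrite cards_eq0; apply/eqP/setP => s; rewrite !inE.
  apply/negP => /pincP; apply: L6; lia.
have -> : G 0 = (0 < k) * cn n.+1 k.-1.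
  case: (posnP k) => [k0|kp].
    rewrite mul0n; apply/eqP; rewrite cards_eq0; apply/eqP/setP => s; rewrite !inE.
    by apply/negP => /pincP /(L4 _ _ (ltn0Sn n)) []; rewrite k0.
  rewrite mul1n; apply: eq_card => s; rewrite !inE.
  apply/pincP/pincP => [/(L4 _ _ (ltn0Sn n)) [] //| H].
  by apply/(L4 _ _ (ltn0Sn n)).
have -> : G n.+1 = (k <= n.+1) * cn n.+1 k.
  case: (leqP k n.+1) => Hk.
    rewrite mul1n; apply: eq_card => s; rewrite !inE.
    apply/pincP/pincP => [/(L5 _ _ (ltn0Sn n)) [] //| H].
    by apply/(L5 _ _ (ltn0Sn n)).
  apply/eqP; rewrite mul0n cards_eq0; apply/eqP/setP => s; rewrite !inE.
  apply/negP => /pincP /(L5 _ _ (ltn0Sn n)) []; lia.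
by rewrite addn0.
Qed.

Lemma occ_small m f : m < 4 -> occb m f = false.
Proof. by move=> Hm; apply/occP => -[i1 [i2 [i3 [i4 [H1 H2 H3 H4 _]]]]]; lia. Qed.

Lemma pinc_small m k f : m < 2 -> pincb m k f.
Proof. by move=> Hm; apply/pincP => a b ab bm; lia. Qed.

Lemma card_full m (P : pred 'S_m) : (forall s, P s) -> #|[set s | P s]| = m`!.
Proof.
move=> H; rewrite -card_Sn; apply: eq_card => s; by rewrite inE H.
Qed.

Lemma an0 : an 0 = 1.
Proof. by rewrite /an card_full // => s; rewrite occ_small. Qed.
Lemma an1 : an 1 = 1.
Proof. by rewrite /an card_full // => s; rewrite occ_small. Qed.
Lemma cn0 k : cn 0 k = 1.
Proof. by rewrite /cn card_full // => s; rewrite pinc_small. Qed.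
Lemma cn1 k : cn 1 k = 1.
Proof. by rewrite /cn card_full // => s; rewrite pinc_small. Qed.

Lemma cn_bin n k : k <= n -> cn n k = 'C(n, k).
Proof.
elim: n k => [|n IH] k Hk.
  by rewrite cn0; case: k Hk.
case: n IH Hk => [|n] IH Hk.
  by rewrite cn1; case: k Hk => [|[|]].
rewrite cn_rec; case: k Hk => [|k] Hk.
  by rewrite /= IH // !bin0.
rewrite /= mul1n IH; last lia.
case: (leqP k.+1 n.+1) => Hk'.
  by rewrite mul1n IH // binS addnC.
have -> : k = n.+1 by lia.
by rewrite mul0n addn0 !binn.
Qed.

Lemma sum_cn n : \sum_(0 <= i < n) cn n.+1 i.+1 = 2 ^ n.+1 - 2.
Proof.
have E : 2 ^ n.+1 = \sum_(i < n.+2) 'C(n.+1, i).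
  by rewrite -[2]/(1 + 1) expnDn; apply: eq_bigr => i _; rewrite !exp1n !muln1.
move: E; rewrite (split_sum (fun i => 'C(n.+1, i))) bin0 binn.
have -> : \sum_(0 <= i < n) 'C(n.+1, i.+1) = \sum_(0 <= i < n) cn n.+1 i.+1.
  by apply: eq_big_nat => i Hi; rewrite cn_bin //; lia.
lia.
Qed.

Lemma an_rec2 n : an n.+2 = 2 * an n.+1 + 2 ^ n.+1 - 2.
Proof.
rewrite an_rec sum_cn.
have : 2 <= 2 ^ n.+1 by rewrite expnS leq_pmulr // expn_gt0.
lia.
Qed.

Lemma ino k (H : k < 4) : inord k = Ordinal H.
Proof. by apply/val_inj; rewrite /= inordK. Qed.

Lemma pop_occ n (s : 'S_n) : pop_contains s p4 = occb n (gs s).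
Proof.
apply/idP/occP.
  case/existsP => f /andP [/forallP M]; rewrite /p4 /= (ino (isT : 0 < 4)) (ino (isT : 1 < 4)) (ino (isT : 2 < 4)) (ino (isT : 3 < 4)) andbT => /andP [A1 A2].
  have Mf : forall x y : 'I_4, x < y -> f x < f y.
    by move=> x y xy; have /forallP /(_ y) /implyP := M x; apply.
  exists (f (Ordinal (isT : 0 < 4))), (f (Ordinal (isT : 1 < 4))),
         (f (Ordinal (isT : 2 < 4))), (f (Ordinal (isT : 3 < 4))).
  rewrite !gsE; split => //; by apply: Mf.
move=> [i1 [i2 [i3 [i4 [H1 H2 H3 H4 [H5 H6]]]]]].
have h3 : i3 < n by lia.
have h2 : i2 < n by lia.
have h1 : i1 < n by lia.
move: H5 H6.
rewrite (_ : i1 = Ordinal h1) // (_ : i2 = Ordinal h2) // (_ : i3 = Ordinal h3) //.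
rewrite (_ : i4 = Ordinal H4) // !gsE => H5 H6.
apply/existsP.
exists [ffun x : 'I_4 => nth (Ordinal h1) [:: Ordinal h1; Ordinal h2; Ordinal h3; Ordinal H4] x].
apply/andP; split.
  apply/forallP => -[[|[|[|[|x]]]] Hx] //; apply/forallP => -[[|[|[|[|y]]]] Hy] //;
  apply/implyP; rewrite /= ?ffunE //= => _; lia.
by rewrite /p4 /= (ino (isT : 0 < 4)) (ino (isT : 1 < 4)) (ino (isT : 2 < 4)) (ino (isT : 3 < 4)) !ffunE /= H5 H6.
Qed.

Lemma cc_occ n (s : 'S_n) q : 3 < size q -> nth 0 q 1 < nth 0 q 0 ->
  nth 0 q 2 < nth 0 q 3 -> classical_contains s q -> occb n (gs s).
Proof.
move=> Hq q10 q23 /existsP [f /forallP M].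
have P : forall x y : 'I_(size q), ((x < y) ==> (f x < f y))
   && ((s (f x) < s (f y)) == (nth 0 q x < nth 0 q y)).
  by move=> x y; have /forallP := M x; apply.
have h0 : 0 < size q by lia.
have h1 : 1 < size q by lia.
have h2 : 2 < size q by lia.
have /andP [/implyP A1 _] := P (Ordinal h0) (Ordinal h1).
have /andP [_ /eqP B1] := P (Ordinal h1) (Ordinal h0).
have /andP [/implyP A2 _] := P (Ordinal h1) (Ordinal h2).
have /andP [/implyP A3 /eqP B3] := P (Ordinal h2) (Ordinal Hq).
apply/occP; exists (f (Ordinal h0)), (f (Ordinal h1)), (f (Ordinal h2)), (f (Ordinal Hq)).
rewrite !gsE B1 B3; split => //; [exact: A1 | exact: A2 | exact: A3].
Qed.

Lemma mk_cc n (s : 'S_n) q (g : 'I_(size q) -> 'I_n) :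
  (forall x y : 'I_(size q), x < y -> g x < g y) ->
  (forall x y : 'I_(size q), (s (g x) < s (g y)) = (nth 0 q x < nth 0 q y)) ->
  classical_contains s q.
Proof.
move=> M E; apply/existsP; exists (finfun g); apply/forallP => x; apply/forallP => y.
rewrite !ffunE E eqxx andbT; apply/implyP; exact: M.
Qed.

Definition Lpat : seq (seq nat) :=
  [:: [:: 2; 1; 3; 4]; [:: 3; 1; 2; 4]; [:: 4; 1; 2; 3];
      [:: 3; 2; 1; 4]; [:: 4; 2; 1; 3]; [:: 4; 3; 1; 2]].

Ltac fin K q := apply: (K q) => //;
  move=> [[|[|[|[|x]]]] Hx] // [[|[|[|[|y]]]] Hy] //=; lia.

Lemma occ_class n (s : 'S_n) : occb n (gs s) = has (classical_contains s) Lpat.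
Proof.
apply/idP/idP; last first.
  rewrite /Lpat /= orbF; case/or4P => [H|H|H|/or3P [H|H|H]]; apply: (cc_occ _ _ _ H) => //.
move/occP => [i1 [i2 [i3 [i4 [H1 H2 H3 H4 [H5 H6]]]]]].
have h3 : i3 < n by lia.
have h2 : i2 < n by lia.
have h1 : i1 < n by lia.
have d13 : gs s i1 <> gs s i3 by move/(gs_inj h1 h3); lia.
have d14 : gs s i1 <> gs s i4 by move/(gs_inj h1 H4); lia.
have d23 : gs s i2 <> gs s i3 by move/(gs_inj h2 h3); lia.
have d24 : gs s i2 <> gs s i4 by move/(gs_inj h2 H4); lia.
move: H5 H6 d13 d14 d23 d24.
rewrite (_ : i1 = Ordinal h1) // (_ : i2 = Ordinal h2) // (_ : i3 = Ordinal h3) //.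
rewrite (_ : i4 = Ordinal H4) // !gsE.
set o1 := Ordinal h1; set o2 := Ordinal h2; set o3 := Ordinal h3; set o4 := Ordinal H4.
move=> H5 H6 d13 d14 d23 d24.
have M : forall x y : 'I_4, x < y ->
    nth o1 [:: o1; o2; o3; o4] x < nth o1 [:: o1; o2; o3; o4] y.
  by move=> [[|[|[|[|x]]]] Hx] // [[|[|[|[|y]]]] Hy] //= _; lia.
have K : forall q, q \in Lpat ->
   (forall x y : 'I_4, (s (nth o1 [:: o1; o2; o3; o4] x) < s (nth o1 [:: o1; o2; o3; o4] y))
       = (nth 0 q x < nth 0 q y)) -> has (classical_contains s) Lpat.
  move=> q qL E; apply/hasP; exists q => //.
  have sq : size q = 4 by move: qL; rewrite /Lpat !inE => /or4P [|||/or3P []] /eqP ->.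
  move: E; rewrite -sq => E.
  apply: (mk_cc (g := fun x : 'I_(size q) => nth o1 [:: o1; o2; o3; o4] x)).
    move=> x y xy; have hx : x < 4 by rewrite -sq.
    have hy : y < 4 by rewrite -sq.
    exact: (M (Ordinal hx) (Ordinal hy) xy).
  exact: E.
case: (ltngtP (s o1) (s o3)) => c13; last by case: d13.
  fin K [:: 2; 1; 3; 4].
case: (ltngtP (s o1) (s o4)) => c14; last by case: d14.
  case: (ltngtP (s o2) (s o3)) => c23; last by case: d23.
    fin K [:: 3; 1; 2; 4].
  fin K [:: 3; 2; 1; 4].
case: (ltngtP (s o2) (s o3)) => c23; last by case: d23.
  fin K [:: 4; 1; 2; 3].
case: (ltngtP (s o2) (s o4)) => c24; last by case: d24.
  fin K [:: 4; 2; 1; 3].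
fin K [:: 4; 3; 1; 2].
Qed.
Lemma a_an n : a n = an n.
Proof. by rewrite /a /an; apply: eq_card => s; rewrite !inE /pop_avoids pop_occ. Qed.

Local Open Scope ring_scope.

Lemma PX k : (2 ^ k)%N%:Z = 2%:Z ^+ k.
Proof. by elim: k => // k IH; rewrite expnS PoszM IH exprS. Qed.

Definition dd (i : nat) : int :=
  match i with 0 => 1 | 1 => -5 | 2 => 8 | 3 => -4 | _ => 0 end.
Definition nn (i : nat) : int :=
  match i with 0 => 1 | 1 => -4 | 2 => 5 | _ => 0 end.

Lemma den_coef i : gf_den`_i = dd i.
Proof.
have -> : gf_den = 1 - 5%:R *: 'X + 8%:R *: 'X^2 - 4%:R *: 'X^3.
  rewrite /gf_den -!mul_polyC !polyC_natr; ring.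
rewrite !(coefD, coefN, coefZ, coefXn, coefX, coef1).
by case: i => [|[|[|[|i]]]].
Qed.

Lemma num_coef i : gf_num`_i = nn i.
Proof.
rewrite /gf_num !(coefD, coefN, coefZ, coefXn, coefX, coef1).
by case: i => [|[|[|i]]].
Qed.

Theorem theorem3p5 :
  (* avoiding p is equivalent to avoiding 2134, 3124, 4123, 3214, 4213, 4312 *)
  (forall (n : nat) (s : 'S_n),
     pop_avoids s p4 =
     all (classical_avoids s)
       [:: [:: 2; 1; 3; 4]; [:: 3; 1; 2; 4]; [:: 4; 1; 2; 3];
           [:: 3; 2; 1; 4]; [:: 4; 2; 1; 3]; [:: 4; 3; 1; 2]]%N) /\
  a 0 = 1%N /\
  (forall n : nat, (1 <= n)%N ->
     (a n)%:Z = 2%:Z * (a n.-1)%:Z + 2%:Z ^+ n.-1 - 2%:Z) /\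
  (forall n : nat, (1 <= n)%N ->
     (a n)%:Z = (n%:Z - 2%:Z) * 2%:Z ^+ n.-1 + 2%:Z) /\
  (* sum_n a(n) x^n = gf_num / gf_den as formal power series, i.e.
     gf_den * (sum_n a(n) x^n) = gf_num coefficientwise *)
  (forall n : nat,
     \sum_(i < n.+1) gf_den`_i * (a (n - i)%N)%:Z = gf_num`_n).
Proof.
split.
  move=> n s; rewrite /pop_avoids pop_occ occ_class /Lpat /=.
  by rewrite /classical_avoids !negb_or.
split; first by rewrite a_an an0.
have rec : forall n, (1 <= n)%N -> (a n)%:Z = 2 * (a n.-1)%:Z + 2 ^+ n.-1 - 2.
  case => [//|[|m]] _.
    by rewrite !a_an an1 an0 expr0.
  rewrite !a_an an_rec2 /= -PX.
  have : (2 <= 2 ^ m.+1)%N by rewrite expnS leq_pmulr // expn_gt0.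
  lia.
have closed : forall n, (1 <= n)%N -> (a n)%:Z = (n%:Z - 2) * 2 ^+ n.-1 + 2.
  elim => // n IH _; case: n IH => [_|n IH].
    by rewrite a_an an1 expr0.
  rewrite rec // /= IH // /= exprS; lia.
split => //; split => //.
move=> n.
under eq_bigr do rewrite den_coef.
rewrite num_coef.
have a0 : (a 0)%:Z = 1 by rewrite a_an an0.
case: n => [|[|[|m]]].
- by rewrite big_ord_recl big_ord0 /= a0.
- by rewrite !big_ord_recl big_ord0 /= a0 closed //= expr0; lia.
- by rewrite !big_ord_recl big_ord0 /= a0 !closed //= ?expr0 ?expr1; lia.
rewrite -(big_mkord xpredT (fun i => dd i * (a (m.+3 - i)%N)%:Z)).
rewrite !big_nat_recl // big1 ?addr0; last by move=> i _; rewrite /= mul0r.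
rewrite /= !subSS !subn0.
case: m => [|m].
  by rewrite a0 !closed //= ?expr0 ?expr1 ?exprS ?expr0; lia.
rewrite !closed //= !exprS; lia.
Qed.
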